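(* Let $n \ge 5$ and let $S$ be a set of transpositions generating $S_n$. Let $G$ be the automorphism group of the Cayley graph $X = \mathrm{Cay}(S_n,S)$, let $G_e$ be the stabilizer in $G$ of the identity vertex $e$, and let $L_e$ be the subgroup of $G_e$ consisting of the automorphisms that fix $e$ and each of its neighbors. Then $G_e = L_e \rtimes \mathrm{Aut}(S_n,S)$, i.e. $G_e = L_e \,\mathrm{Aut}(S_n,S)$ with $L_e$ normal in $G_e$ and $L_e \cap \mathrm{Aut}(S_n,S) = 1$.
   Context: The Cayley graph $\mathrm{Cay}(S_n,S)$ has vertex set $S_n$ and edge set $\{\{h, sh\} : h \in S_n, s \in S\}$; the neighbors of $e$ are exactly the elements of $S$. $\mathrm{Aut}(S_n,S)$ denotes the group of group automorphisms $\phi$ of $S_n$ with $\phi(S) = S$; each such $\phi$ is a permutation of $S_n$ that fixes $e$ and is an automorphism of $\mathrm{Cay}(S_n,S)$, so $\mathrm{Aut}(S_n,S)$ is regarded as a subgroup of $G_e$. *)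

(* Defs.v *)
From mathcomp Require Import all_boot all_fingroup.
Set Implicit Arguments. Unset Strict Implicit. Unset Printing Implicit Defensive.
Import GroupScope.
Local Open Scope group_scope.

Notation Sn n := {perm 'I_n}.

(* Edge {h, s h} of Cay(S_n, S) (s \in S), as a symmetric relation. *)
Definition cay_adj (n : nat) (S : {set Sn n}) (h k : Sn n) : bool :=
  (k * h^-1 \in S) || (h * k^-1 \in S).

Definition cay_aut (n : nat) (S : {set Sn n}) : {set {perm Sn n}} :=
  [set f : {perm Sn n} |
     [forall h : Sn n, forall k : Sn n, cay_adj S (f h) (f k) == cay_adj S h k]].

Definition cay_stab (n : nat) (S : {set Sn n}) : {set {perm Sn n}} :=
  [set f in cay_aut S | f 1 == 1].

Definition cay_local (n : nat) (S : {set Sn n}) : {set {perm Sn n}} :=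
  [set f in cay_stab S | [forall s in S, f s == s]].

Definition AutSnS (n : nat) (S : {set Sn n}) : {set {perm Sn n}} :=
  [set a in Aut [set: Sn n] | a @: S == S].

Definition is_transposition (n : nat) (s : Sn n) : Prop :=
  exists i j : 'I_n, i != j /\ s = tperm i j.

(* Main.v *)
Require Import Defs.
From mathcomp Require Import all_boot all_fingroup.
Set Implicit Arguments. Unset Strict Implicit. Unset Printing Implicit Defensive.
Import GroupScope.
Local Open Scope group_scope.

Section Trans.
Variable T : finType.
Implicit Types (s t x y : {perm T}) (i j k z : T).

Definition trans s := exists i j, i != j /\ s = tperm i j.

Lemma mv_tperm i j z : i != j -> (tperm i j z != z) = (z == i) || (z == j).
Proof.
move=> ij; case: tpermP => [->|->|zi zj]; first by rewrite eqxx /= eq_sym.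
  by rewrite eqxx orbT.
by rewrite eqxx; apply/esym/norP; split; apply/eqP.
Qed.

Lemma trans_inv s : trans s -> s * s = 1.
Proof. by case=> i [j [_ ->]]; exact: tperm2. Qed.

Lemma trans_V s : trans s -> s^-1 = s.
Proof. by case=> i [j [_ ->]]; exact: tpermV. Qed.

Lemma trans_invol s z : trans s -> s (s z) = z.
Proof. by case=> i [j [_ ->]]; rewrite tpermK. Qed.

Lemma tperm_moved s z : trans s -> s z != z -> s = tperm z (s z).
Proof.
case=> i [j [ij ->]]; rewrite mv_tperm // => /orP[]/eqP->.
  by rewrite tpermL.
by rewrite tpermR tpermC.
Qed.

Lemma trans_moved s z : trans s -> s z != z -> s (s z) != s z.
Proof. by move=> ts mz; rewrite trans_invol // eq_sym. Qed.

Lemma trans_eq2 s s' p q : trans s -> trans s' -> p != q ->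
  s p != p -> s q != q -> s' p != p -> s' q != q -> s = s'.
Proof.
move=> ts ts' pq sp sq s'p s'q.
have h1 := tperm_moved ts sp; have h2 := tperm_moved ts' s'p.
have e1 : s p = q.
  move: sq; rewrite h1 mv_tperm ?(eq_sym p) -?h1 // => /orP[/eqP qp|/eqP//].
  by rewrite qp eqxx in pq.
have e2 : s' p = q.
  move: s'q; rewrite h2 mv_tperm ?(eq_sym p) -?h2 // => /orP[/eqP qp|/eqP//].
  by rewrite qp eqxx in pq.
by rewrite h1 h2 e1 e2.
Qed.

Lemma trans3 s a b c : trans s -> s a != a -> s b != b -> s c != c ->
  [|| a == b, b == c | a == c].
Proof.
case=> i [j [ij ->]]; rewrite !mv_tperm //.
by case/orP=>/eqP->; case/orP=>/eqP->; case/orP=>/eqP->; rewrite ?eqxx ?orbT.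
Qed.

Lemma mulg_eq1 x y : trans y -> x * y = 1 -> x = y.
Proof.
move=> ty /(canRL (mulgK y)); rewrite mul1g trans_V //.
Qed.

Lemma subs x y x' y' z : trans x -> trans y -> trans x' -> trans y' -> x != y ->
  x * y = x' * y' -> y' z != z -> (x z != z) || (y z != z).
Proof.
move=> tx ty tx' ty' nxy E mz.
case: (eqVneq (x z) z) => [xz|]; last by [].
case: (eqVneq (y z) z) => [yz|]; last by [].
exfalso.
have wz : (x' * y') z = z by rewrite -E permM xz yz.
rewrite permM in wz.
case: (eqVneq (x' z) z) => [h|mx'].
  by rewrite h in wz; rewrite wz eqxx in mz.
have e : x' z = y' z by apply: (@perm_inj _ y'); rewrite wz trans_invol.
have ex : x' = y' by rewrite (tperm_moved tx' mx') (tperm_moved ty' mz) e.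
have : x * y = 1 by rewrite E ex trans_inv.
by move/(mulg_eq1 ty)/eqP; rewrite (negbTE nxy).
Qed.

Definition disj x y := forall z, x z != z -> y z == z.

Lemma disj_sym x y : disj x y -> disj y x.
Proof. move=> d z yz; apply/negPn/negP => /d; by rewrite (negbTE yz). Qed.

Lemma disj_neq x y z1 z2 : disj x y -> x z1 != z1 -> y z2 != z2 -> z1 != z2.
Proof. move=> d h1 h2; apply/eqP=> e; subst; by rewrite (eqP (d _ h1)) eqxx in h2. Qed.

Lemma cross x y x' p q : trans x -> trans y -> trans x' -> disj x y ->
  x p != p -> y q != q -> x * y = x' * tperm p q -> False.
Proof.
move=> tx ty tx' d xp yq E.
have pq : p != q by exact: disj_neq d xp yq.
have E' : x' = x * y * tperm p q by rewrite E -mulgA tperm2 mulg1.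
set p' := x p; set q' := y q.
have xp' : x p' != p' by exact: trans_moved.
have yq' : y q' != q' by exact: trans_moved.
have yp : y p = p by apply/eqP; exact: d.
have yp' : y p' = p' by apply/eqP; exact: d.
have xq' : x q' = q' by apply/eqP; exact: (disj_sym d).
have p'q : p' != q by exact: disj_neq d xp' yq.
have q'p : q' != p by rewrite eq_sym; exact: disj_neq d xp yq'.
have p'q' : p' != q' by exact: disj_neq d xp' yq'.
have p'p : p' != p by [].
have h1 : x' p' = q by rewrite E' !permM trans_invol // yp tpermL.
have h2 : x' q' = p by rewrite E' !permM xq' trans_invol // tpermR.
have h3 : x' p = p' by rewrite E' !permM yp' tpermD // eq_sym.
have := trans3 tx' (_ : x' p' != p') (_ : x' q' != q') (_ : x' p != p).
rewrite h1 h2 h3 eq_sym p'q eq_sym q'p p'p => /(_ isT isT isT).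
by rewrite (negbTE p'q') (negbTE q'p) (negbTE p'p).
Qed.

Lemma disjP x y x' y' : trans x -> trans y -> trans x' -> trans y' -> disj x y ->
  x * y = x' * y' -> y' = x \/ y' = y.
Proof.
move=> tx ty tx' ty' d E.
have nxy : x != y.
  case: tx => i [j [ij ex]]; apply/eqP=> exy.
  have : x i != i by rewrite ex tpermL eq_sym.
  by move/d; rewrite -exy ex tpermL eq_sym (negbTE ij).
case: (ty') => p [q [pq ey']].
have mp : y' p != p by rewrite ey' tpermL eq_sym.
have mq : y' q != q by rewrite ey' tpermR.
move: (subs tx ty tx' ty' nxy E mp) (subs tx ty tx' ty' nxy E mq).
case/orP=> hp; case/orP=> hq.
- by left; apply: (trans_eq2 ty' tx pq).
- by exfalso; apply: (cross tx ty tx' d hp hq); rewrite E ey'.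
- by exfalso; apply: (cross tx ty tx' d hq hp); rewrite E ey' tpermC.
- by right; apply: (trans_eq2 ty' ty pq).
Qed.


Lemma disj_comm x y : trans x -> trans y -> disj x y -> x * y = y * x.
Proof.
move=> tx ty d; apply/permP=> z; rewrite !permM.
case: (eqVneq (x z) z) => [xz|mx].
  rewrite xz; case: (eqVneq (y z) z) => [->|my]; first by rewrite xz.
  by apply/esym/eqP; apply: (disj_sym d); exact: trans_moved.
rewrite (eqP (d _ mx)); apply/eqP; apply: d; exact: trans_moved.
Qed.

Definition shareb x y := [exists z, (x z != z) && (y z != z)].

Lemma nshare_disj x y : ~~ shareb x y -> disj x y.
Proof.
move=> h z xz; apply/negPn/negP=> yz; move/negP: h; apply.
by apply/existsP; exists z; rewrite xz.
Qed.

Lemma share_nf s t : trans s -> trans t -> s != t -> shareb s t ->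
  exists i j k, [/\ i != j, j != k, i != k, s = tperm i j & t = tperm j k].
Proof.
move=> ts tt st /existsP[z /andP[sz tz]].
exists (s z), z, (t z); split.
- by [].
- by rewrite eq_sym.
- apply: contra st => /eqP e.
  by rewrite (tperm_moved ts sz) (tperm_moved tt tz) e.
- by rewrite {1}(tperm_moved ts sz) tpermC.
- exact: tperm_moved.
Qed.

Lemma noncomm i j k : i != j -> j != k -> i != k ->
  tperm i j * tperm j k != tperm j k * tperm i j.
Proof.
move=> ij jk ik; apply/eqP=> /permP/(_ i); rewrite !permM tpermL tpermL.
rewrite (tpermD (_ : j != i)) 1?eq_sym //; rewrite tpermL => /eqP.
by rewrite eq_sym (negbTE jk).
Qed.

Lemma in3 i j k u : i != j -> j != k -> i != k -> trans u ->
  (forall z, u z != z -> [|| z == i, z == j | z == k]) ->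
  u != tperm i j -> u != tperm j k -> u = tperm i k.
Proof.
move=> ij jk ik tu h n1 n2.
case: (tu) => p [q [pq eu]].
have mp : u p != p by rewrite eu tpermL eq_sym.
have mq : u q != q by rewrite eu tpermR.
move: (h _ mp) (h _ mq) n1 n2 pq; rewrite eu.
case/orP=>[/eqP->|/orP[]/eqP->]; case/orP=>[/eqP->|/orP[]/eqP->]; rewrite ?eqxx // ?(tpermC j i) ?(tpermC k j) ?(tpermC k i) ?eqxx //.
Qed.

Lemma share_fac i j k a b : i != j -> j != k -> i != k -> trans a -> trans b ->
  a * tperm i j = b * tperm j k -> a != tperm i j ->
  a = tperm j k \/ a = tperm i k.
Proof.
move=> ij jk ik ta tb E na.
have ts : trans (tperm i j) by exists i, j.
have tt : trans (tperm j k) by exists j, k.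
have mk : tperm j k k != k by rewrite tpermR.
have := subs ta ts tb tt na E mk; rewrite tpermD ?eqxx ?orbF //.
move=> ak; have ea := tperm_moved ta ak.
set l := a k in ea ak.
have lk : l != k by [].
case: (eqVneq l j) => [lj|lj]; first by left; rewrite ea lj tpermC.
case: (eqVneq l i) => [li|li]; first by right; rewrite ea li tpermC.
exfalso.
have d : disj a (tperm i j).
  move=> z; rewrite ea mv_tperm; last by rewrite eq_sym.
  by case/orP=> /eqP ->; rewrite tpermD // eq_sym.
case: (disjP ta ts tb tt d E) => /permP/(_ k); rewrite ?tpermR.
  by rewrite ea tpermL => /eqP; rewrite eq_sym (negbTE lj).
by rewrite tpermD // => /eqP; rewrite (negbTE jk).
Qed.

End Trans.


Section Graph.
Variable n : nat.
Variable S : {set {perm 'I_n}}.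
Hypothesis HT : forall s, s \in S -> trans s.

Lemma SV x : (x^-1 \in S) = (x \in S).
Proof.
apply/idP/idP => h; last by rewrite trans_V //; apply: HT.
by rewrite -(invgK x) trans_V //; apply: HT.
Qed.

Lemma adjS w s : s \in S -> cay_adj S w s = (w * s \in S).
Proof.
move=> Hs; rewrite /cay_adj -{1}(trans_V (HT Hs)) -invMg SV.
by rewrite (trans_V (HT Hs)) orbb.
Qed.

Lemma adj1 k : cay_adj S 1 k = (k \in S).
Proof. by rewrite /cay_adj invg1 mulg1 mul1g SV orbb. Qed.

Lemma aut_adj f h k : f \in cay_aut S -> cay_adj S (f h) (f k) = cay_adj S h k.
Proof. by rewrite inE => /forallP/(_ h)/forallP/(_ k)/eqP. Qed.

Lemma autM f g : f \in cay_aut S -> g \in cay_aut S -> f * g \in cay_aut S.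
Proof.
move=> Hf Hg; rewrite inE; apply/forallP=> h; apply/forallP=> k.
by rewrite !permM aut_adj // aut_adj.
Qed.

Lemma autV f : f \in cay_aut S -> f^-1 \in cay_aut S.
Proof.
move=> Hf; rewrite inE; apply/forallP=> h; apply/forallP=> k.
by rewrite -(aut_adj _ _ Hf) !permKV.
Qed.

Lemma stab_aut f : f \in cay_stab S -> f \in cay_aut S.
Proof. by rewrite inE => /andP[]. Qed.

Lemma stab1 f : f \in cay_stab S -> f 1 = 1.
Proof. by rewrite inE => /andP[_ /eqP]. Qed.

Lemma stabM f g : f \in cay_stab S -> g \in cay_stab S -> f * g \in cay_stab S.
Proof.
move=> Hf Hg; rewrite inE autM ?stab_aut //= permM !stab1 //.
Qed.

Lemma stabV f : f \in cay_stab S -> f^-1 \in cay_stab S.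
Proof.
move=> Hf; rewrite inE autV ?stab_aut //=.
by rewrite -{1}(stab1 Hf) permK.
Qed.

Lemma stab_S f x : f \in cay_stab S -> (f x \in S) = (x \in S).
Proof.
by move=> Hf; rewrite -!adj1 -{1}(stab1 Hf) aut_adj ?stab_aut.
Qed.

Lemma stab_neq1 f w : f \in cay_stab S -> w != 1 -> f w != 1.
Proof.
by move=> Hf; apply: contra => /eqP; rewrite -{1}(stab1 Hf) => /perm_inj ->.
Qed.

Definition tri s t u := [exists w, [&& w != 1, cay_adj S w s, cay_adj S w t & cay_adj S w u]].
Definition dis s t := [exists w, [&& w != 1, cay_adj S w s, cay_adj S w t &
   [forall x in S, cay_adj S w x ==> (x == s) || (x == t)]]].

Lemma tri_inv f s t u : f \in cay_stab S -> tri s t u -> tri (f s) (f t) (f u).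
Proof.
move=> Hf /existsP[w /and4P[w1 a1 a2 a3]]; apply/existsP; exists (f w).
have Ha := stab_aut Hf; by rewrite (stab_neq1 Hf w1) !(aut_adj _ _ Ha) a1 a2 a3.
Qed.

Lemma dis_inv f s t : f \in cay_stab S -> dis s t -> dis (f s) (f t).
Proof.
move=> Hf /existsP[w /and4P[w1 a1 a2 /forall_inP a3]]; apply/existsP; exists (f w).
have Ha := stab_aut Hf; rewrite (stab_neq1 Hf w1) !(aut_adj _ _ Ha) a1 a2 /=.
apply/forall_inP => x xS; rewrite -[x](permKV f) aut_adj //.
have xS' : f^-1 x \in S by rewrite -(stab_S _ Hf) permKV.
apply/implyP=> h; have := a3 _ xS'; rewrite h /=.
by case/orP=>/eqP->; rewrite eqxx ?orbT.
Qed.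


Lemma tpJ (T : finType) (i j k : T) : i != j -> j != k -> i != k -> tperm i j ^ tperm j k = tperm i k.
Proof. by move=> ij jk ik; rewrite tpermJ tpermL tpermD // eq_sym. Qed.

Lemma tp_conj (T : finType) (a b : T) y : tperm a b * y * tperm a b = y ^ tperm a b.
Proof. by rewrite /conjg tpermV mulgA. Qed.

Lemma wfac w s : s \in S -> w = (w * s) * s.
Proof. by move=> Hs; rewrite -mulgA trans_inv ?mulg1 //; apply: HT. Qed.

Lemma neq_tp (T : finType) (i j k : T) : i != j -> j != k -> i != k ->
  (tperm i k != tperm i j) && (tperm i k != tperm j k).
Proof.
move=> ij jk ik; apply/andP; split; apply/eqP => /permP.
  by move/(_ i); rewrite !tpermL => /eqP; rewrite eq_sym (negbTE jk).
by move/(_ k); rewrite !tpermR => /eqP; rewrite (negbTE ij).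
Qed.

Lemma dis_share s t : s \in S -> t \in S -> s != t -> dis s t = ~~ shareb s t.
Proof.
move=> sS tS st; apply/idP/idP.
  case/existsP=> w /and4P[w1 a1 a2 /forall_inP a3]; apply/negP => sh.
  have [i [j [k [ij jk ik es et]]]] := share_nf (HT sS) (HT tS) st sh.
  rewrite adjS // in a1; rewrite adjS // in a2.
  have ea := wfac w sS; have eb := wfac w tS.
  have E : (w * s) * tperm i j = (w * t) * tperm j k by rewrite -es -et -ea -eb.
  have na : w * s != tperm i j.
    by apply: contra w1 => /eqP h; apply/eqP; rewrite ea h es tperm2.
  have nb : w * t != tperm k j.
    by apply: contra w1 => /eqP h; apply/eqP; rewrite eb h et tpermC tperm2.
  have kj : k != j by rewrite eq_sym.
  have ji : j != i by rewrite eq_sym.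
  have ki : k != i by rewrite eq_sym.
  have E' : (w * t) * tperm k j = (w * s) * tperm j i by rewrite tpermC (tpermC j i) E.
  have /andP[rs rt] := neq_tp ij jk ik.
  have contr : tperm i k \in S -> w * tperm i k \in S -> False.
    move=> rS h; have := a3 _ rS; rewrite adjS // h /= es et.
    by rewrite (negbTE rs) (negbTE rt).
  case: (share_fac ij jk ik (HT a1) (HT a2) E na) => ha.
    case: (share_fac kj ji ki (HT a2) (HT a1) E' nb) => hb.
      have e1 : w = tperm j k * tperm i j by rewrite {1}ea ha es.
      have e2 : w = tperm i j * tperm j k by rewrite {1}eb hb et tpermC.
      by move: (noncomm ij jk ik); rewrite -e1 -e2 eqxx.
    apply: contr; first by rewrite tpermC -hb.
    rewrite {1}eb hb et (tpermC k i) tp_conj tpermJ.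
    by rewrite tpermR tpermD // tpermC -es.
  apply: contr; first by rewrite -ha.
  rewrite {1}ea ha es tp_conj tpermJ.
  by rewrite tpermL tpermD // tpermC -et.
move=> nsh; have d := nshare_disj nsh.
have ts := HT sS; have tt := HT tS.
apply/existsP; exists (s * t); rewrite !adjS //.
have -> : s * t != 1 by apply: contra st => /eqP/(mulg_eq1 tt) ->.
have -> : s * t * t \in S by rewrite -mulgA trans_inv // mulg1.
have -> : s * t * s \in S by rewrite (disj_comm ts tt d) -mulgA trans_inv // mulg1.
rewrite /=.
apply/forall_inP => x xS; rewrite adjS //; apply/implyP => h.
have E : s * t = (s * t * x) * x by rewrite -mulgA trans_inv ?mulg1 //; apply: HT.
by case: (disjP ts tt (HT h) (HT xS) d E) => ->; rewrite eqxx ?orbT.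
Qed.


Lemma tri_char s t u : s \in S -> t \in S -> u \in S -> s != t -> s != u -> t != u ->
  tri s t u = shareb s t && (u == s ^ t).
Proof.
move=> sS tS uS st su tu; have ts := HT sS; have tt := HT tS; have tu' := HT uS.
apply/idP/idP.
  case/existsP=> w /and4P[w1 a1 a2 a3].
  rewrite adjS // in a1; rewrite adjS // in a2; rewrite adjS // in a3.
  have ea := wfac w sS; have eb := wfac w tS; have ec := wfac w uS.
  have na : w * s != s.
    by apply: contra w1 => /eqP h; apply/eqP; rewrite ea h trans_inv.
  have sh : shareb s t.
    case: (boolP (shareb s t)) => // nsh; exfalso; have d := nshare_disj nsh.
    have E : (w * s) * s = (w * t) * t by rewrite -ea -eb.
    have e1 : w * s = t.
      case: (tt) => p [q [pq et]].
      have mp : t p != p by rewrite et tpermL eq_sym.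
      have mq : t q != q by rewrite et tpermR.
      have hp := subs (HT a1) ts (HT a2) tt na E mp.
      have hq := subs (HT a1) ts (HT a2) tt na E mq.
      rewrite (eqP (disj_sym d mp)) eqxx orbF in hp.
      rewrite (eqP (disj_sym d mq)) eqxx orbF in hq.
      exact: (trans_eq2 (HT a1) tt pq hp hq mp mq).
    have E2 : t * s = (w * u) * u by rewrite -e1 -ea -ec.
    case: (disjP tt ts (HT a3) tu' (disj_sym d) E2) => e; move: tu su.
      by rewrite e eqxx.
    by rewrite e eqxx.
  rewrite sh /=.
  have [i [j [k [ij jk ik es et]]]] := share_nf ts tt st sh.
  have E : (w * s) * tperm i j = (w * t) * tperm j k by rewrite -es -et -ea -eb.
  have na' : w * s != tperm i j by rewrite -es.
  have ha := share_fac ij jk ik (HT a1) (HT a2) E na'.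
  have E3 : (w * s) * s = (w * u) * u by rewrite -ea -ec.
  have hu : forall z, u z != z -> [|| z == i, z == j | z == k].
    move=> z mz; have := subs (HT a1) ts (HT a3) tu' na E3 mz.
    case/orP.
      by case: ha => ->; rewrite mv_tperm // => /orP[]/eqP->; rewrite eqxx ?orbT.
    by rewrite es mv_tperm // => /orP[]/eqP->; rewrite eqxx ?orbT.
  have n1 : u != tperm i j by rewrite -es eq_sym.
  have n2 : u != tperm j k by rewrite -et eq_sym.
  by rewrite (in3 ij jk ik tu' hu n1 n2) es et tpJ.
case/andP=> sh /eqP eu.
have [i [j [k [ij jk ik es et]]]] := share_nf ts tt st sh.
apply/existsP; exists (s * t); rewrite !adjS //.
have -> : s * t != 1 by apply: contra st => /eqP/(mulg_eq1 tt) ->.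
have -> : s * t * t \in S by rewrite -mulgA trans_inv // mulg1.
have -> : s * t * s \in S.
  have hu : u = tperm i k by rewrite eu es et tpJ.
  by rewrite {1 2}es tp_conj et tpermJ tpermR tpermD // -hu.
have -> : s * t * u \in S.
  rewrite eu /conjg trans_V // !mulgA -(mulgA s t t) trans_inv // mulg1.
  by rewrite trans_inv // mul1g.
by [].
Qed.

End Graph.


Section Tri3.
Variable T : finType.
Implicit Types (a b c : {perm T}).

Lemma two_pts a b p : trans a -> trans b -> a != b -> a p != p -> b p != p ->
  exists q r, [/\ a = tperm p q, b = tperm p r, q != p, r != p & q != r].
Proof.
move=> ta tb ab ap bp.
exists (a p), (b p); split; try exact: tperm_moved => //.
- by [].
- by [].
by apply: contra ab => /eqP e; apply/eqP; rewrite (tperm_moved ta ap) (tperm_moved tb bp) e.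
Qed.

Lemma tri3 a b c p : trans a -> trans b -> trans c -> a != b ->
  a p != p -> b p != p -> c p == p -> shareb c a -> shareb c b -> c = a ^ b.
Proof.
move=> ta tb tc ab ap bp cp /existsP[z1 /andP[c1 a1]] /existsP[z2 /andP[c2 b2]].
have [q [r [ea eb qp rp qr]]] := two_pts ta tb ab ap bp.
subst a b.
have z1p : z1 != p by apply: contraNneq c1 => ->.
have z2p : z2 != p by apply: contraNneq c2 => ->.
have pq : p != q by rewrite eq_sym.
have pr : p != r by rewrite eq_sym.
move: a1; rewrite mv_tperm // (negbTE z1p) /= => /eqP e1; subst z1.
move: b2; rewrite mv_tperm // (negbTE z2p) /= => /eqP e2; subst z2.
have tq : trans (tperm q r) by exists q, r.
rewrite (trans_eq2 tc tq qr c1 c2) ?tpermL ?tpermR //; last by rewrite eq_sym.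
by rewrite tpermJ tpermL (tpermD pq) 1?eq_sym // tpermC.
Qed.

Lemma conj_fix a b p : trans a -> trans b -> a != b -> a p != p -> b p != p ->
  (a ^ b) p == p.
Proof.
move=> ta tb ab ap bp.
have [q [r [ea eb qp rp qr]]] := two_pts ta tb ab ap bp.
subst a b.
by rewrite tpermJ tpermL tpermD // tpermD // eq_sym.
Qed.

End Tri3.


Section Conn.
Variable n : nat.
Variable S : {set {perm 'I_n}}.
Hypothesis HT : forall s, s \in S -> trans s.
Hypothesis HG : <<S>> = [set: {perm 'I_n}].
Hypothesis Hn : (2 < n)%N.

Lemma preserve (A : {set 'I_n}) :
  (forall s, s \in S -> forall z, z \in A -> s z \in A) ->
  forall (p : {perm 'I_n}) z, z \in A -> p z \in A.
Proof.
move=> h p z zA.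
have gH : group_set [set q : {perm 'I_n} | [forall y in A, q y \in A]].
  apply/group_setP; split.
    by rewrite inE; apply/forall_inP => y yA; rewrite perm1.
  move=> x y; rewrite !inE => /forall_inP hx /forall_inP hy.
  by apply/forall_inP => y0 y0A; rewrite permM; apply: hy; apply: hx.
have sub : S \subset Group gH.
  apply/subsetP => s sS; rewrite inE; apply/forall_inP => y yA; exact: h.
move: sub; rewrite -gen_subG HG => /subsetP/(_ p (in_setT p)).
by rewrite inE => /forall_inP; apply.
Qed.

Lemma other (i j : 'I_n) : exists k, (k != i) && (k != j).
Proof.
case: (pickP (fun k => (k != i) && (k != j))) => [k hk|h]; first by exists k.
exfalso.
have : [set: 'I_n] \subset [set i; j].
  apply/subsetP => k _; move: (h k); rewrite !inE => /negbT.
  by rewrite negb_and !negbK.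
move/subset_leq_card; rewrite cardsT card_ord cards2.
by case: (i != j) => /=; move=> h2; move: Hn; rewrite ltnNge; case/negP; apply: (leq_trans h2).
Qed.

Lemma C1 i : exists2 s, s \in S & s i != i.
Proof.
case: (boolP [exists s in S, s i != i]) => [/exists_inP[s sS si]|nh].
  by exists s.
exfalso.
have hs : forall s, s \in S -> s i == i.
  move=> s sS; apply: contraNT nh => h; apply/exists_inP; exists s => //.
have [j /andP[ji _]] := other i i.
have hA : forall s, s \in S -> forall z, z \in [set i] -> s z \in [set i].
  by move=> s sS z; rewrite inE => /eqP ->; rewrite inE; exact: hs.
have := preserve hA (tperm i j) (set11 i).
by rewrite inE tpermL (negbTE ji).
Qed.

Lemma C2 i j : i != j -> tperm i j \in S ->
  exists2 x, x \in S & (x != tperm i j) && ((x i != i) || (x j != j)).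
Proof.
move=> ij tS.
case: (boolP [exists x in S, (x != tperm i j) && ((x i != i) || (x j != j))]).
  by case/exists_inP => x xS h; exists x.
move=> nh; exfalso.
have hs : forall x, x \in S -> x != tperm i j -> (x i == i) && (x j == j).
  move=> x xS xn; apply: contraNT nh; rewrite negb_and => h.
  by apply/exists_inP; exists x => //; rewrite xn.
have [k /andP[ki kj]] := other i j.
have hA : forall s, s \in S -> forall z, z \in [set i; j] -> s z \in [set i; j].
  move=> s sS z; rewrite !inE.
  case: (eqVneq s (tperm i j)) => [->|sn].
    by case/orP=> /eqP ->; rewrite ?tpermL ?tpermR eqxx ?orbT.
  by have /andP[/eqP si /eqP sj] := hs _ sS sn; case/orP=> /eqP ->; rewrite ?si ?sj eqxx ?orbT.
have := preserve hA (tperm i k) (setU11 i [set j]).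
by rewrite !inE tpermL (negbTE ki) (negbTE kj).
Qed.

End Conn.


Section Pi.
Variable n : nat.
Variable S : {set {perm 'I_n}}.
Hypothesis HT : forall s, s \in S -> trans s.
Hypothesis HG : <<S>> = [set: {perm 'I_n}].
Hypothesis Hn : (2 < n)%N.
Variable f : {perm {perm 'I_n}}.
Hypothesis Hf : f \in cay_stab S.

Lemma fS s : s \in S -> f s \in S.
Proof. by rewrite (stab_S HT _ Hf). Qed.

Lemma fneq s t : s != t -> f s != f t.
Proof. by apply: contra => /eqP/perm_inj ->. Qed.

Lemma PS s t : s \in S -> t \in S -> s != t -> shareb (f s) (f t) = shareb s t.
Proof.
move=> sS tS st.
have e1 := dis_share HT sS tS st.
have e2 := dis_share HT (fS sS) (fS tS) (fneq st).
rewrite -[shareb s t]negbK -e1 -[shareb (f s) (f t)]negbK -e2; congr (~~ _).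
apply/idP/idP; last exact: (dis_inv HT).
move/(dis_inv HT (stabV Hf)); by rewrite !permK.
Qed.

Lemma PT s t u : s \in S -> t \in S -> u \in S -> s != t -> s != u -> t != u ->
  shareb (f s) (f t) && (f u == f s ^ f t) = shareb s t && (u == s ^ t).
Proof.
move=> sS tS uS st su tu.
rewrite -!(tri_char HT) ?fS ?fneq //.
apply/idP/idP; last exact: tri_inv.
move/(tri_inv (stabV Hf)); by rewrite !permK.
Qed.

Definition Rp i p := forall x, x \in S -> (x i != i) = (f x p != p).

Lemma share_at (T : finType) (s t : {perm T}) (z : T) : s z != z -> t z != z -> shareb s t.
Proof. by move=> h1 h2; apply/existsP; exists z; rewrite h1. Qed.

Lemma deg2 i s t : s \in S -> t \in S -> s != t -> s i != i -> t i != i ->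
  exists p, Rp i p.
Proof.
move=> sS tS st si ti.
have sh : shareb s t := share_at si ti.
have fst := fneq st.
have := sh; rewrite -PS // => /existsP[p /andP[sp tp]].
exists p => x xS.
case: (eqVneq x s) => [->|xs]; first by rewrite si sp.
case: (eqVneq x t) => [->|xt]; first by rewrite ti tp.
have fsS := fS sS; have ftS := fS tS; have fxS := fS xS.
have sx : s != x by rewrite eq_sym.
have tx : t != x by rewrite eq_sym.
apply/idP/idP => [xi|fxp].
  apply/negP => fxp.
  have sh1 : shareb (f x) (f s) by rewrite PS //; exact: share_at xi si.
  have sh2 : shareb (f x) (f t) by rewrite PS //; exact: share_at xi ti.
  have e := tri3 (HT fsS) (HT ftS) (HT fxS) fst sp tp fxp sh1 sh2.
  have := PT sS tS xS st sx tx.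
  rewrite e eqxx andbT PS // sh /= => /esym /eqP ex.
  have := conj_fix (HT sS) (HT tS) st si ti; rewrite -ex.
  by rewrite (negbTE xi).
apply/negP => xi.
have sh1 : shareb x s by rewrite -PS //; exact: share_at fxp sp.
have sh2 : shareb x t by rewrite -PS //; exact: share_at fxp tp.
have ex := tri3 (HT sS) (HT tS) (HT xS) st si ti xi sh1 sh2.
have := PT sS tS xS st sx tx; rewrite {2}ex eqxx andbT sh => /andP[_ /eqP efx].
have := conj_fix (HT fsS) (HT ftS) fst sp tp; rewrite -efx.
by rewrite (negbTE fxp).
Qed.


Lemma Rex i : exists p, Rp i p.
Proof.
case: (boolP [exists s in S, exists t in S, (s != t) && (s i != i) && (t i != i)]).
  case/exists_inP => s sS /exists_inP[t tS /andP[/andP[st si] ti]].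
  exact: deg2 sS tS st si ti.
move=> nh.
have [s sS si] := C1 HG Hn i.
have leaf : forall x, x \in S -> x i != i -> x = s.
  move=> x xS xi; apply/eqP; apply: contraNT nh => xs.
  apply/exists_inP; exists x => //; apply/exists_inP; exists s => //.
  by rewrite xs xi si.
set j := s i.
have es : s = tperm i j := tperm_moved (HT sS) si.
have ij : i != j by rewrite eq_sym.
have tS : tperm i j \in S by rewrite -es.
have [x xS /andP[xs hx]] := C2 HG Hn ij tS.
rewrite -es in xs.
have xj : x j != j.
  by case/orP: hx => // xi; move: xs; rewrite (leaf _ xS xi) eqxx.
have sj : s j != j := trans_moved (HT sS) si.
have sx : s != x by rewrite eq_sym.
have [q Rq] := deg2 sS xS sx sj xj.
have fsq : f s q != q by rewrite -Rq.
set p' := f s q.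
have fsp : f s p' != p' := trans_moved (HT (fS sS)) fsq.
exists p' => y yS.
case: (eqVneq y s) => [->|ys]; first by rewrite si fsp.
have -> : (y i != i) = false.
  apply/negbTE; apply: contra ys => yi; apply/eqP; exact: leaf yS yi.
apply/esym/negbTE/negP => fyp.
have shf : shareb (f y) (f s) := share_at fyp fsp.
rewrite PS // in shf.
case/existsP: shf => z /andP[yz sz].
move: sz; rewrite es mv_tperm // => /orP[]/eqP ez; subst z.
  by move: ys; rewrite (leaf _ yS yz) eqxx.
have fyq : f y q != q by rewrite -Rq.
have qp : q != p' by rewrite eq_sym.
have := trans_eq2 (HT (fS yS)) (HT (fS sS)) qp fyq fyp fsq fsp.
by move/perm_inj => e; move: ys; rewrite e eqxx.
Qed.

Definition Rb i p := [forall x in S, (x i != i) == (f x p != p)].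

Lemma RbP i p : reflect (Rp i p) (Rb i p).
Proof.
apply: (iffP forall_inP) => h x xS; first exact: (eqP (h x xS)).
by apply/eqP; exact: (h x xS).
Qed.

Definition pi i := odflt i [pick p | Rb i p].

Lemma piR i : Rp i (pi i).
Proof.
rewrite /pi; case: pickP => [p /RbP //| h]; exfalso.
have [p Hp] := Rex i; move: (h p); by rewrite (introT (RbP _ _) Hp).
Qed.

Lemma pi_inj : injective pi.
Proof.
move=> i i' e; have h1 := piR i; have h2 := piR i'; rewrite e in h1.
have hh : forall x, x \in S -> (x i != i) = (x i' != i').
  by move=> x xS; rewrite h1 // h2.
case: (eqVneq i i') => // ii'; exfalso.
have tt : trans (tperm i i') by exists i, i'.
have t1 : tperm i i' i != i by rewrite tpermL eq_sym.
have t2 : tperm i i' i' != i' by rewrite tpermR.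
have [s sS si] := C1 HG Hn i.
have es : s = tperm i i'.
  by apply: (trans_eq2 (HT sS) tt ii' si _ t1 t2); rewrite -hh.
have tS : tperm i i' \in S by rewrite -es.
have [x xS /andP[xs hx]] := C2 HG Hn ii' tS.
have xi : x i != i by case/orP: hx => // h; rewrite hh.
have xi' : x i' != i' by rewrite -hh.
by move: xs; rewrite (trans_eq2 (HT xS) tt ii' xi xi' t1 t2) eqxx.
Qed.

Lemma conj_exists : exists g : {perm 'I_n}, forall s, s \in S -> f s = s ^ g.
Proof.
exists (perm pi_inj) => s sS.
have ts := HT sS; case: (ts) => i [j [ij es]].
have si : s i != i by rewrite es tpermL eq_sym.
have sj : s j != j by rewrite es tpermR.
rewrite {2}es tpermJ !permE.
have pij : pi i != pi j by apply: contra ij => /eqP/pi_inj ->.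
have tq : trans (tperm (pi i) (pi j)) by exists (pi i), (pi j).
apply: (trans_eq2 (HT (fS sS)) tq pij); rewrite -?piR ?tpermL ?tpermR //.
by rewrite eq_sym.
Qed.

End Pi.


Section Final.
Variable n : nat.
Variable S : {set {perm 'I_n}}.
Hypothesis HT : forall s, s \in S -> trans s.

Lemma autM1 (a : {perm {perm 'I_n}}) x y : a \in Aut [set: {perm 'I_n}] ->
  a (x * y) = a x * a y.
Proof. by move=> Aa; rewrite -!(autmE Aa) morphM ?inE. Qed.

Lemma autV1 (a : {perm {perm 'I_n}}) x : a \in Aut [set: {perm 'I_n}] ->
  a x^-1 = (a x)^-1.
Proof. by move=> Aa; rewrite -!(autmE Aa) morphV ?inE. Qed.

Lemma aut11 (a : {perm {perm 'I_n}}) : a \in Aut [set: {perm 'I_n}] -> a 1 = 1.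
Proof. by move=> Aa; rewrite -!(autmE Aa) morph1. Qed.

Lemma autS a : a \in AutSnS S -> a \in cay_stab S.
Proof.
rewrite inE => /andP[Aa /eqP aS].
have memS x : (a x \in S) = (x \in S).
  by rewrite -{1}aS mem_imset //; exact: perm_inj.
rewrite inE aut11 // eqxx andbT inE; apply/forallP=> h; apply/forallP=> k.
by rewrite /cay_adj -!autV1 // -!autM1 // !memS.
Qed.

End Final.

Theorem proposition7 (n : nat) (S : {set {perm 'I_n}}) :
  (5 <= n)%N ->
  (forall s, s \in S -> is_transposition s) ->
  <<S>> = [set: {perm 'I_n}] ->
  [/\ cay_stab S = cay_local S * AutSnS S,
      cay_local S <| cay_stab S
    & cay_local S :&: AutSnS S = 1].
Proof.
move=> Hn5 HT' HG.
have HT : forall s, s \in S -> trans s := HT'.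
have Hn : (2 < n)%N by apply: leq_trans Hn5.
have locS l : l \in cay_local S -> l \in cay_stab S.
  by rewrite inE => /andP[].
have locF l s : l \in cay_local S -> s \in S -> l s = s.
  by rewrite inE => /andP[_ /forall_inP h] sS; apply/eqP; apply: h.
have mkloc l : l \in cay_stab S -> (forall s, s \in S -> l s = s) -> l \in cay_local S.
  by move=> h1 h2; rewrite inE h1; apply/forall_inP => s sS; rewrite h2.
split.
- apply/eqP; rewrite eqEsubset; apply/andP; split; last first.
    apply/subsetP => _ /mulsgP[l a Hl Ha ->].
    exact: stabM (locS _ Hl) (autS Ha).
  apply/subsetP => f Hf.
  have [g Hg] := conj_exists HT HG Hn Hf.
  set a := conj_aut [set: {perm 'I_n}] g.
  have Aa : a \in Aut [set: {perm 'I_n}] by exact: Aut_aut.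
  have aE y : a y = y ^ g by rewrite /a conj_autE ?inE.
  have aS : a @: S = S.
    apply/eqP; rewrite eqEcard card_imset; last exact: perm_inj.
    rewrite leqnn andbT; apply/subsetP => _ /imsetP[s sS ->].
    by rewrite aE -Hg // (stab_S HT _ Hf).
  have AS : a \in AutSnS S by rewrite inE Aa aS eqxx.
  rewrite -(mulgKV a f); apply: mem_mulg => //.
  apply: mkloc; first exact: stabM Hf (stabV (autS AS)).
  by move=> s sS; rewrite permM Hg // -aE permK.
- apply/normalP; split.
    by apply/subsetP => l; exact: locS.
  have sub g : g \in cay_stab S -> cay_local S :^ g \subset cay_local S.
    move=> Hg; apply/subsetP => _ /imsetP[l Hl ->].
    apply: mkloc.
      by rewrite /conjg; apply: stabM (stabV Hg) (stabM (locS _ Hl) Hg).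
    move=> s sS; rewrite /conjg !permM (locF l) ?permKV //.
    by rewrite (stab_S HT _ (stabV Hg)).
  move=> g Hg; apply/eqP; rewrite eqEcard sub // cardJg leqnn //.
- apply/setP => a.
  apply/idP/idP.
    case/setIP => /[dup] HL /locF Hl.
    rewrite inE => /andP[Aa _].
    have gH : group_set [set x : {perm 'I_n} | a x == x].
      apply/group_setP; split; first by rewrite inE aut11.
      by move=> x y; rewrite !inE => /eqP hx /eqP hy; rewrite autM1 // hx hy.
    have : S \subset Group gH by apply/subsetP => s sS; rewrite inE Hl.
    rewrite -gen_subG HG => /subsetP hsub.
    apply/set1P/permP => x; rewrite perm1; apply/eqP.
    by have := hsub x (in_setT x); rewrite inE.
  move/set1P->; apply/setIP; split.
    apply: mkloc; last by move=> s _; rewrite perm1.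
    rewrite inE; apply/andP; split; last by rewrite perm1.
    by rewrite inE; apply/forallP=> h; apply/forallP=> k; rewrite !perm1.
  rewrite inE group1 /=; apply/eqP; rewrite -[RHS]imset_id.
  by apply: eq_imset => x; rewrite perm1.
Qed.
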